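(* $T(2,\omega^2)=4$.
   Context: $[c]=\{1,\dots,c\}$. Each ordinal $\alpha$ is identified with the linearly ordered set of ordinals $\beta<\alpha$; $\omega^2$ is the set of ordinals $\omega\cdot a+b$ with $a,b\in\mathbb{N}$, ordered lexicographically. $\binom{S}{n}$ is the set of $n$-element subsets of $S$. $\approx$ denotes order-equivalence. For a linearly ordered set $S$ and $n\in\mathbb{N}$, $T(n,S)$ is the least $t\in\mathbb{N}$ such that for every $c\ge 1$ and every coloring $\mathrm{COL}:\binom{S}{n}\to[c]$ there exists $S'\subseteq S$ with $S'\approx S$ and $|\mathrm{COL}(\binom{S'}{n})|\le t$ (or $\infty$ if no such $t$ exists). *)

(* Defs.v *)
From mathcomp Require Import all_boot.
Set Implicit Arguments.
Unset Strict Implicit.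

(* The ordinal omega^2 = { omega*a + b | a, b in nat }, represented as pairs
   (a, b) : nat * nat with the lexicographic (strict) order. *)
Definition omega2_lt : rel (nat * nat) :=
  fun x y => (x.1 < y.1) || ((x.1 == y.1) && (x.2 < y.2)).

(* For a linearly ordered set X (strict order lt), an n-element subset is
   represented by its increasing enumeration: a lt-sorted sequence of size n.
   A subset S' of X order-equivalent to X is exactly the image of an order
   embedding f : X -> X (then f is an order isomorphism X ~ S'), and the
   n-subsets of S' are exactly the [map f s] for n-subsets s of X. *)
Definition nsubset (X : Type) (lt : rel X) (n : nat) (s : seq X) : Prop :=
  sorted lt s /\ size s = n.

Definition T_bound (X : Type) (lt : rel X) (n t : nat) : Prop :=
  forall c : nat, 1 <= c ->
  forall COL : seq X -> nat,
    (forall s, nsubset lt n s -> 1 <= COL s <= c) ->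
    exists f : X -> X,
      (forall a b, lt a b -> lt (f a) (f b)) /\
      exists L : seq nat, size L <= t /\
        (forall s, nsubset lt n s -> COL (map f s) \in L).

Definition T_is (X : Type) (lt : rel X) (n t : nat) : Prop :=
  T_bound lt n t /\ forall t', T_bound lt n t' -> t <= t'.

(* Main.v *)
Require Import Defs.
From mathcomp Require Import all_boot zify.
From Stdlib Require Import Classical IndefiniteDescription.
Set Implicit Arguments. Unset Strict Implicit.

Definition strict (h : nat -> nat) := forall m n, m < n -> h m < h n.

Lemma inf_often (cv : nat -> nat) c : (forall n, cv n < c) ->
  exists v, forall N, exists n, (N <= n) && (cv n == v).
Proof.
elim: c cv => [|c IH] cv Hc; first by have := Hc 0.
case: (classic (forall N, exists n, (N <= n) && (cv n == c))) => [H|H].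
  by exists c.
have [N HN] := not_all_ex_not _ _ H.
have HN' : forall n, N <= n -> cv n != c.
  move=> n Hn; apply/negP => /eqP E; apply: HN; exists n; by rewrite Hn E eqxx.
have Hb : forall n, cv (n + N) < c.
  move=> n; have := Hc (n + N); have := HN' (n + N) (leq_addl _ _).
  by rewrite ltnS leq_eqVlt => /negbTE ->.
have [v Hv] := IH (fun n => cv (n + N)) Hb.
exists v => N'; have [n /andP[H1 H2]] := Hv N'; exists (n + N).
by rewrite H2 andbT; lia.
Qed.

Lemma pigeon (cv : nat -> nat) c : (forall n, cv n < c) ->
  exists nu, strict nu /\ exists v, forall i, cv (nu i) = v.
Proof.
move=> Hc; have [v Hv] := inf_often Hc.
pose nx N := xchoose (Hv N).
have Hnx N : (N <= nx N) && (cv (nx N) == v) := xchooseP (Hv N).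
pose nu i := iter i (fun m => nx m.+1) (nx 0).
exists nu; split.
  move=> m n; apply: (@homo_ltn _ nu (fun a b => a < b)); first by move=> y x z; apply: ltn_trans.
  move=> i; rewrite /nu iterS; have /andP[H _] := Hnx (iter i (fun m => nx m.+1) (nx 0)).+1; exact: H.
exists v; case=> [|i]; rewrite /nu ?iterS.
  by have /andP[_ /eqP] := Hnx 0.
by have /andP[_ /eqP] := Hnx (iter i (fun m => nx m.+1) (nx 0)).+1.
Qed.

Lemma sorted_strict h s : strict h -> sorted ltn s -> sorted ltn (map h s).
Proof. move=> Hh; apply: homo_sorted => x y; exact: Hh. Qed.

Lemma sorted_unmap h s : strict h -> sorted ltn (map h s) -> sorted ltn s.
Proof.
move=> Hh; rewrite sorted_map; apply: sub_sorted => a b /=.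
by rewrite (leqW_mono (leq_mono Hh)).
Qed.

Lemma ramsey k : forall (chi : seq nat -> nat) c,
  (forall s, sorted ltn s -> size s = k -> chi s < c) ->
  exists h, strict h /\ exists v, forall s, sorted ltn s -> size s = k -> chi (map h s) = v.
Proof.
elim: k => [|k IH] chi c Hc.
  exists id; split; first by [].
  exists (chi [::]) => s _; by case: s.
pose Spec (g : nat -> nat) (p : (nat -> nat) * nat) :=
  [/\ strict p.1, p.2 < c,
   (exists phi, [/\ strict phi, (forall y, 0 < phi y) & forall y, p.1 y = g (phi y)])
   & forall t, sorted ltn t -> size t = k -> chi (g 0 :: map p.1 t) = p.2].
have Hstep : forall g, exists p, strict g -> Spec g p.
  move=> g; case: (classic (strict g)) => Hg; last by exists (id, 0).
  pose chi' t := chi (g 0 :: map (fun y => g y.+1) t).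
  have Hb : forall t, sorted ltn t -> size t = k -> chi' t < c.
    move=> t St Zt; apply: Hc; last by rewrite /= size_map Zt.
    rewrite /= path_sortedE; last exact: ltn_trans.
    apply/andP; split.
      by apply/allP => z /mapP [y _ ->]; apply: Hg.
    by apply: (sorted_strict (h := fun y => g y.+1)) => // a b ab; apply: Hg.
  have [h' [Hh' [v Hv]]] := IH chi' c Hb.
  exists ((fun y => g (h' y).+1), v) => _; split => /=.
  - by move=> a b ab; apply: Hg; apply: Hh'.
  - rewrite -(Hv (iota 0 k)) ?iota_ltn_sorted ?size_iota //.
    apply: Hb; last by rewrite size_map size_iota.
    exact: sorted_strict (iota_ltn_sorted 0 k).
  - exists (fun y => (h' y).+1); split => //.

  - move=> t St Zt; rewrite -(Hv t St Zt) /chi'; congr chi; congr cons.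
    by rewrite -map_comp.
have [stp Hstp] : exists stp : (nat -> nat) -> (nat -> nat) * nat,
    forall g, strict g -> Spec g (stp g).
  exists (fun g => proj1_sig (constructive_indefinite_description _ (Hstep g))).
  move=> g; exact: (proj2_sig (constructive_indefinite_description _ (Hstep g))).
pose gs n := iter n (fun g => (stp g).1) id.
have gsS n : gs n.+1 = (stp (gs n)).1 by [].
have F1 : forall n, strict (gs n).
  elim=> [|n IHn]; first by [].
  by rewrite gsS; case: (Hstp _ IHn).
have HS n : Spec (gs n) (stp (gs n)) := Hstp _ (F1 n).
have F2 : forall n d, exists phi, strict phi /\ forall y, gs (n + d) y = gs n (phi y).
  move=> n; elim=> [|d [phi [Hp Ep]]]; first by exists id; split => // y; rewrite addn0.
  case: (HS (n + d)) => _ _ [phi1 [Hp1 _ Ep1]] _.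
  exists (fun y => phi (phi1 y)); split; first by move=> a b ab; apply: Hp; apply: Hp1.
  by move=> y; rewrite addnS gsS Ep1 Ep.
pose x n := gs n 0.
have Xpre : forall n m, n < m -> exists y, x m = gs n.+1 y.
  move=> n m nm; have [phi [_ Ep]] := F2 n.+1 (m - n.+1).
  exists (phi 0); rewrite /x -Ep; congr gs; lia.
have Xs : strict x.
  move=> n m nm; have [y ->] := Xpre n m nm.
  case: (HS n) => _ _ [phi1 [_ Pp Ep1]] _.
  rewrite gsS Ep1; apply: F1; exact: Pp.
have pre : forall n t, all (fun m => n < m) t -> exists t'', map x t = map (gs n.+1) t''.
  move=> n; elim=> [|a t IHt] /=; first by exists [::].
  case/andP=> na /IHt [t'' Et]; have [y Ey] := Xpre n a na.
  by exists (y :: t''); rewrite /= Et Ey.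
pose cv n := (stp (gs n)).2.
have Main : forall n t, all (fun m => n < m) t -> sorted ltn t -> size t = k ->
    chi (x n :: map x t) = cv n.
  move=> n t At St Zt; have [t'' Et] := pre n t At.
  have St'' : sorted ltn t''.
    apply: (sorted_unmap (F1 n.+1)); rewrite -Et; exact: sorted_strict.
  have Zt'' : size t'' = k by rewrite -Zt -(size_map (gs n.+1)) -Et size_map.
  case: (HS n) => _ _ _ H; rewrite /cv -(H t'' St'' Zt''); congr chi; congr cons; exact: Et.
have Hcv : forall n, cv n < c by move=> n; case: (HS n).
have [nu [Hnu [v Hv]]] := pigeon Hcv.
exists (fun i => x (nu i)); split; first by move=> a b ab; apply: Xs; apply: Hnu.
exists v; case=> [|s0 s'] //= Ss [Zs].
rewrite path_sortedE in Ss; last exact: ltn_trans.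
case/andP: Ss => As Ss.
rewrite (map_comp x nu) Main ?Hv //.
- rewrite all_map; apply/allP => z zs /=; apply: Hnu; exact: (allP As z zs).
- exact: sorted_strict.
- by rewrite size_map.
Qed.

Lemma o2P (p q : nat * nat) : omega2_lt p q <-> p.1 < q.1 \/ (p.1 = q.1 /\ p.2 < q.2).
Proof.
rewrite /omega2_lt; split.
  case/orP => [->|/andP[/eqP -> ->]]; by [left | right].
case=> [->//|[-> ->]]; by rewrite eqxx orbT.
Qed.

Lemma o2_pair (p q : nat * nat) : nsubset omega2_lt 2 [:: p; q] <-> omega2_lt p q.
Proof. by rewrite /nsubset /= andbT; split => [[]|]. Qed.

Lemma lex_bound (g : nat -> nat * nat) P :
  (forall j, omega2_lt (g j) (g j.+1)) -> (forall j, omega2_lt (g j) P) ->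
  forall M, exists j, M <= (g j).2.
Proof.
move=> Hg HP M; apply: NNPP => H.
have HM : forall j, (g j).2 < M.
  move=> j; rewrite ltnNge; apply/negP => Hj; apply: H; by exists j.
have Hc : forall j, j <= (g j).1 * M + (g j).2.
  elim=> [|j IHj]; first by [].
  have := Hg j; rewrite o2P => Hj; have := HM j; have := HM j.+1.
  case: Hj => [Hr|[Hr Hs]] H1 H2.
    have : ((g j).1 + 1) * M <= (g j.+1).1 * M by rewrite leq_mul2r; lia.
    nia.
  rewrite -Hr; lia.
have := Hc (((P.1) + 1) * M); have := HP (((P.1) + 1) * M); rewrite o2P => HPj.
have := HM (((P.1) + 1) * M).
set r := (g _).1; set s := (g _).2 => Hs.
have : r * M <= P.1 * M by rewrite leq_mul2r; case: HPj; lia.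
nia.
Qed.

Lemma o2_col i j j' : j < j' -> omega2_lt (i, j) (i, j').
Proof. by move=> H; rewrite /omega2_lt /= eqxx H orbT. Qed.
Lemma o2_row i i' j j' : i < i' -> omega2_lt (i, j) (i', j').
Proof. by move=> H; rewrite /omega2_lt /= H. Qed.

Section Low.
Variable f : nat * nat -> nat * nat.
Hypothesis Hf : forall a b, omega2_lt a b -> omega2_lt (f a) (f b).

Lemma o2_le p q : omega2_lt p q -> p.1 <= q.1.
Proof. rewrite o2P; lia. Qed.

Lemma rowA i M : exists j, (f (i, j)).1 < (f (i.+1, 0)).1 /\ M <= (f (i, j)).2.
Proof.
have [j Hj] := @lex_bound (fun j => f (i, j)) (f (i.+1, 0))
  (fun j => Hf (o2_col i (ltnSn j)))
  (fun j => Hf (o2_row j 0 (ltnSn i))) (M + (f (i.+1, 0)).2 + 1).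
exists j; have := Hf (o2_row j 0 (ltnSn i)).
rewrite o2P /= in Hj *; lia.
Qed.

Lemma row_le i j : (f (i, 0)).1 <= (f (i, j)).1.
Proof.
case: j => [//|j]; apply: o2_le; apply: Hf; rewrite o2P; right; by split.
Qed.

Lemma row_inc i : (f (i, 0)).1 < (f (i.+1, 0)).1.
Proof.
have [j [H1 _]] := rowA i 0; have := row_le i j; lia.
Qed.

Lemma row_ge i : i <= (f (i, 0)).1.
Proof. elim: i => [//|i IH]; have := row_inc i; lia. Qed.

Lemma same_row : exists j, (f (0, j)).1 = (f (0, j.+1)).1.
Proof.
apply: NNPP => H.
have Hs : forall j, (f (0, j)).1 < (f (0, j.+1)).1.
  move=> j; have : (f (0, j)).1 <= (f (0, j.+1)).1.
    apply: o2_le; apply: Hf; rewrite o2P; right; by split.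
  rewrite leq_eqVlt => /orP[/eqP E|//]; exfalso; apply: H; by exists j.
have Hg : forall j, j <= (f (0, j)).1 by elim=> [//|j IH]; have := Hs j; lia.
set R := (f (1, 0)).1.
have := Hg R.+1; have : (f (0, R.+1)).1 <= R.
  apply: o2_le; apply: Hf; rewrite o2P; by left.
lia.
Qed.
End Low.

Definition color4 (x y : nat * nat) : nat :=
  if x.1 == y.1 then 1 else if x.2 <= y.1 then 2 else if x.2 < y.2 then 3 else 4.
Definition COL4 (s : seq (nat * nat)) : nat :=
  match s with [:: x; y] => color4 x y | _ => 1 end.

Lemma lower t : T_bound omega2_lt 2 t -> 4 <= t.
Proof.
move=> Tb.
have Hb : forall s, nsubset omega2_lt 2 s -> 1 <= COL4 s <= 4.
  move=> s _; rewrite /COL4; case: s => [|x [|y [|]]] //; rewrite /color4.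
  by case: ifP => //; case: ifP => //; case: ifP.
have [f [Hf [L [HL HC]]]] := Tb 4 isT COL4 Hb.
have inL : forall x y, omega2_lt x y -> color4 (f x) (f y) \in L.
  move=> x y xy; exact: (HC [:: x; y] (proj2 (o2_pair x y) xy)).
suff : {subset [:: 1; 2; 3; 4] <= L}.
  by move/(uniq_leq_size (isT : uniq [:: 1; 2; 3; 4])) => /= H; apply: leq_trans H HL.
move=> k; rewrite !inE => /orP[/eqP->|/orP[/eqP->|/orP[/eqP->|/eqP->]]].
- have [j Hj] := same_row Hf.
  have := inL _ _ (o2_col 0 (ltnSn j)); by rewrite /color4 Hj eqxx.
- set a := (f (0, 0)).1; set b := (f (0, 0)).2.
  have := inL _ _ (o2_row 0 0 (ltn0Sn (a + b))).
  have := row_ge Hf (a + b).+1.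
  rewrite /color4 -/a -/b; case: ifP => [/eqP|_]; first lia.
  by case: ifP => //; lia.
- have [j [Hx1 Hx2]] := rowA Hf 0 (f (2, 0)).1.
  have [j' [Hy1 Hy2]] := rowA Hf 1 (f (0, j)).2.+1.
  have := row_le Hf 1 j'.
  have := inL _ _ (o2_row j j' (ltn0Sn 0)).
  rewrite /color4; case: ifP => [/eqP|_]; first lia.
  case: ifP => [|_]; first lia.
  by case: ifP => //; lia.
- have [j [Hx1 Hx2]] := rowA Hf 0 ((f (1, 0)).1 + (f (1, 0)).2 + 1).
  have := inL _ _ (o2_row j 0 (ltn0Sn 0)).
  rewrite /color4; case: ifP => [/eqP|_]; first lia.
  case: ifP => [|_]; first lia.
  by case: ifP => //; lia.
Qed.

Definition code i j := 2 ^ i * (2 * j + 1).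

Lemma code_col i j j' : j < j' -> code i j < code i j'.
Proof. by move=> H; rewrite /code ltn_pmul2l ?expn_gt0 //; lia. Qed.

Lemma code_row i i' : i < i' -> code i 0 < code i' 0.
Proof. by move=> H; rewrite /code !muln1 ltn_exp2l. Qed.

Lemma code_ne i i' j j' : i < i' -> code i j != code i' j'.
Proof.
move=> H; have [d ->] : exists d, i' = i + d.+1 by exists (i' - i).-1; lia.
rewrite /code expnD expnS -!mulnA eqn_pmul2l ?expn_gt0 //.
apply/negP => /eqP; set X := 2 ^ d * _; lia.
Qed.

Lemma sorted4 (P : seq nat -> Prop) :
  (forall w0 w1 w2 w3, w0 < w1 -> w1 < w2 -> w2 < w3 -> P [:: w0; w1; w2; w3]) ->
  forall s, sorted ltn s -> size s = 4 -> P s.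
Proof.
move=> H [|w0 [|w1 [|w2 [|w3 [|]]]]] //= /and4P[a b c _] _; exact: H.
Qed.

Lemma sorted3 (P : seq nat -> Prop) :
  (forall w0 w1 w2, w0 < w1 -> w1 < w2 -> P [:: w0; w1; w2]) ->
  forall s, sorted ltn s -> size s = 3 -> P s.
Proof.
move=> H [|w0 [|w1 [|w2 [|]]]] //= /and3P[a b _] _; exact: H.
Qed.

Lemma upper : T_bound omega2_lt 2 4.
Proof.
move=> c _ COL HCOL.
have Hb : forall p q, omega2_lt p q -> COL [:: p; q] < c.+1.
  move=> p q pq; have /andP[_] := HCOL _ (proj2 (o2_pair p q) pq); by rewrite ltnS.
pose chiA s := COL [:: (nth 0 s 0, nth 0 s 2); (nth 0 s 1, nth 0 s 3)].
pose chiB s := COL [:: (nth 0 s 0, nth 0 s 3); (nth 0 s 1, nth 0 s 2)].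
pose chiC s := COL [:: (nth 0 s 0, nth 0 s 1); (nth 0 s 2, nth 0 s 3)].
pose chiD s := COL [:: (nth 0 s 0, nth 0 s 1); (nth 0 s 0, nth 0 s 2)].
have [h1 [H1 [vA HA]]] : exists h, strict h /\ exists v, forall s, sorted ltn s -> size s = 4 -> chiA (map h s) = v.
  apply: (@ramsey 4 chiA c.+1); apply: sorted4 => w0 w1 w2 w3 a b d.
  by apply: Hb; apply: o2_row.
have [h2 [H2 [vB HB]]] : exists h, strict h /\ exists v, forall s, sorted ltn s -> size s = 4 -> chiB (map h1 (map h s)) = v.
  apply: (@ramsey 4 (fun s => chiB (map h1 s)) c.+1); apply: sorted4 => w0 w1 w2 w3 a b d.
  by apply: Hb; apply: o2_row; apply: H1.
have [h3 [H3 [vC HC]]] : exists h, strict h /\ exists v, forall s, sorted ltn s -> size s = 4 -> chiC (map h1 (map h2 (map h s))) = v.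
  apply: (@ramsey 4 (fun s => chiC (map h1 (map h2 s))) c.+1); apply: sorted4 => w0 w1 w2 w3 a b d.
  by apply: Hb; apply: o2_row; apply: H1; apply: H2; exact: (ltn_trans a b).
have [h4 [H4 [vD HD]]] : exists h, strict h /\ exists v, forall s, sorted ltn s -> size s = 3 -> chiD (map h1 (map h2 (map h3 (map h s)))) = v.
  apply: (@ramsey 3 (fun s => chiD (map h1 (map h2 (map h3 s)))) c.+1); apply: sorted3 => w0 w1 w2 a b.
  by apply: Hb; apply: o2_col; apply: H1; apply: H2; apply: H3.
pose z n := h1 (h2 (h3 (h4 n))).
have Hz : strict z by move=> a b ab; apply: H1; apply: H2; apply: H3; apply: H4.
have Hh : strict (fun n => h2 (h3 (h4 n))) by move=> a b ab; apply: H2; apply: H3; apply: H4.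
have Hh' : strict (fun n => h3 (h4 n)) by move=> a b ab; apply: H3; apply: H4.
have ZA : forall w0 w1 w2 w3, w0 < w1 -> w1 < w2 -> w2 < w3 ->
    COL [:: (z w0, z w2); (z w1, z w3)] = vA.
  move=> w0 w1 w2 w3 a b d; have := HA [seq h2 (h3 (h4 i)) | i <- [:: w0; w1; w2; w3]].
  by apply; [apply: sorted_strict => //=; rewrite a b d | ].
have ZB : forall w0 w1 w2 w3, w0 < w1 -> w1 < w2 -> w2 < w3 ->
    COL [:: (z w0, z w3); (z w1, z w2)] = vB.
  move=> w0 w1 w2 w3 a b d; have := HB [seq h3 (h4 i) | i <- [:: w0; w1; w2; w3]].
  by apply; [apply: sorted_strict => //=; rewrite a b d | ].
have ZC : forall w0 w1 w2 w3, w0 < w1 -> w1 < w2 -> w2 < w3 ->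
    COL [:: (z w0, z w1); (z w2, z w3)] = vC.
  move=> w0 w1 w2 w3 a b d; have := HC [seq h4 i | i <- [:: w0; w1; w2; w3]].
  by apply; [apply: sorted_strict => //=; rewrite a b d | ].
have ZD : forall w0 w1 w2, w0 < w1 -> w1 < w2 ->
    COL [:: (z w0, z w1); (z w0, z w2)] = vD.
  move=> w0 w1 w2 a b; have := HD [:: w0; w1; w2].
  by apply; rewrite //= a b.
pose f (x : nat * nat) := (z (code x.1 0), z (code x.1 x.2.+1)).
exists f; split.
  case=> a b [a' b']; rewrite o2P /= => -[H|[E H]].
    by apply: o2_row; apply: Hz; apply: code_row.
  rewrite /f /= E; apply: o2_col; apply: Hz; apply: code_col; by rewrite ltnS.
exists [:: vA; vB; vC; vD]; split => // s.
case: s => [|[a b] [|[a' b'] [|? ?]]]; try by move=> [_ /= Hs]; lia.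
move/o2_pair; rewrite o2P /= => -[H|[E H]]; rewrite /f /=.
- have n1 := code_ne b.+1 b'.+1 H; have n2 := code_ne b.+1 0 H.
  have r1 := code_row H; have c1 := code_col a (ltn0Sn b); have c2 := code_col a' (ltn0Sn b').
  case: (ltngtP (code a b.+1) (code a' 0)) => [l1|l1|e1]; last by rewrite e1 eqxx in n2.
    by rewrite (ZC _ _ _ _ c1 l1 c2) !inE eqxx ?orbT.
  case: (ltngtP (code a b.+1) (code a' b'.+1)) => [l2|l2|e2]; last by rewrite e2 eqxx in n1.
    by rewrite (ZA _ _ _ _ r1 l1 l2) !inE eqxx ?orbT.
  by rewrite (ZB _ _ _ _ r1 c2 l2) !inE eqxx ?orbT.
- by rewrite E (ZD _ _ _ (code_col a' (ltn0Sn b)) (code_col a' _)) ?ltnS // !inE eqxx ?orbT.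
Qed.

Theorem theorem6p2 : T_is omega2_lt 2 4.
Proof. split; [exact: upper | exact: lower]. Qed.
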